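(* Let $\mathcal T$ be an $n$-leaf tree ($n\ge 3$) with leaves $N=\{1,\dots,n\}$ and internal edges $I_1,\dots,I_{n-3}$, and let $\mathbf M$ be its $n\times(2n-3)$ Shapley transformation matrix. Then the null space of $\mathbf M$ has dimension $n-3$. A basis of it is given by the vectors $w_{I_1},\dots,w_{I_{n-3}}\in\mathbb R^{2n-3}$, one for each internal edge, with coordinates $$(w_{I_k})_i=\begin{cases}-\dfrac{f(i,I_k)-1}{(n-2)\,c(i,I_k)} & \text{if } 1\le i\le n,\\[2mm] 1 & \text{if } i=n+k,\\ 0 & \text{otherwise,}\end{cases}$$ for $k\in\{1,\dots,n-3\}$. Here the first $n$ coordinates correspond to the leaf edges and coordinate $n+j$ corresponds to the internal edge $I_j$.
   Context: An $n$-leaf tree here is an unrooted tree whose leaves are labeled by $N=\{1,\dots,n\}$ and whose internal vertices all have degree 3. Such a tree has $2n-3$ edges: the $n$ leaf edges (leaf edge $i$ is incident to leaf $i$) and the $n-3$ internal edges $I_1,\dots,I_{n-3}$. Split counts: for a leaf $i$ and an edge $k$, removing $k$ splits the tree into two subtrees. $c(i,k)$ is the number of leaves in the subtree containing $i$, and $f(i,k)=n-c(i,k)$ is the number of leaves in the other subtree. The Shapley transformation matrix $\mathbf M$ is the $n\times(2n-3)$ matrix with entries $\mathbf M[i,k]=\dfrac{f(i,k)}{n\,c(i,k)}$. Its rows are indexed by leaves $i$ and its columns by edges $k$, in the order leaf edges $1,\dots,n$ then $I_1,\dots,I_{n-3}$. Equivalently, $\mathbf M$ is the matrix such that the Shapley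 value of the tree game equals $\mathbf M$ times the vector of edge weights. The tree game assigns to a set of leaves $S$ the total weight of the minimal subtree spanning $S$. *)

(* Defs.v *)
From mathcomp Require Import all_boot all_order all_algebra.
Set Implicit Arguments. Unset Strict Implicit. Unset Printing Implicit Defensive.
Import Order.TTheory GRing.Theory Num.Theory.
Local Open Scope ring_scope.

(* n-leaf trees.  Vertices are 'I_(n + (n-2)): vertex (lshift i) for i : 'I_n *)
(* is the leaf labelled i+1 (the paper's leaf i+1), the remaining n-2        *)
(* vertices (value >= n) are the internal vertices.  The tree is given by a  *)

Definition vert (n : nat) := 'I_(n + (n - 2)).

Definition leafv (n : nat) (i : 'I_n) : vert n := lshift (n - 2) i.

(* e is an n-leaf tree whose leaves are exactly the vertices < n and whose
   internal vertices all have degree 3: connected, |E| = |V| - 1 (so acyclic),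
   leaves of degree 1, internal vertices of degree 3. *)
Definition is_nleaf_tree (n : nat) (e : rel (vert n)) : Prop :=
  [/\ symmetric e, irreflexive e,
      (forall x y : vert n, connect e x y),
      #|[set p : vert n * vert n | e p.1 p.2]| = (2 * (n + (n - 2) - 1))%N
    & (forall v : vert n, #|[set w | e v w]| = if (v < n)%N then 1%N else 3%N)].

(* An edge is represented by an (oriented) pair of its endpoints. *)
Definition del_edge (n : nat) (e : rel (vert n)) (uv : vert n * vert n)
  : rel (vert n) :=
  fun x y => e x y && ~~ (((x == uv.1) && (y == uv.2)) || ((x == uv.2) && (y == uv.1))).

Definition split_c (n : nat) (e : rel (vert n)) (uv : vert n * vert n) (i : 'I_n)
  : nat :=
  #|[set l : 'I_n | connect (del_edge e uv) (leafv i) (leafv l)]|.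

Definition split_f (n : nat) (e : rel (vert n)) (uv : vert n * vert n) (i : 'I_n)
  : nat := (n - split_c e uv i)%N.

Definition leaf_edge (n : nat) (e : rel (vert n)) (i : 'I_n) : vert n * vert n :=
  (leafv i, odflt (leafv i) [pick w | e (leafv i) w]).

(* lab : 'I_(n-3) -> edges enumerates the internal edges I_1,...,I_{n-3}
   (lab k is I_{k+1}): each lab k is an edge between two internal vertices,
   distinct k give distinct (unordered) edges, and every internal edge occurs. *)
Definition is_internal_labeling (n : nat) (e : rel (vert n))
  (lab : 'I_(n - 3) -> vert n * vert n) : Prop :=
  [/\ (forall k, [&& e (lab k).1 (lab k).2, (n <= (lab k).1)%N & (n <= (lab k).2)%N]),
      (forall k k', (lab k == lab k') || (lab k == ((lab k').2, (lab k').1)) -> k = k')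
    & (forall u v : vert n, e u v -> (n <= u)%N -> (n <= v)%N ->
         exists k, lab k = (u, v) \/ lab k = (v, u))].

Definition col_edge (n : nat) (e : rel (vert n)) (lab : 'I_(n - 3) -> vert n * vert n)
  (j : 'I_(n + (n - 3))) : vert n * vert n :=
  match split j with
  | inl i => leaf_edge e i
  | inr k => lab k
  end.

Definition shapley_matrix (R : fieldType) (n : nat) (e : rel (vert n))
  (lab : 'I_(n - 3) -> vert n * vert n) : 'M[R]_(n, n + (n - 3)) :=
  \matrix_(i < n, j < n + (n - 3))
     ((split_f e (col_edge e lab j) i)%:R
        / (n%:R * (split_c e (col_edge e lab j) i)%:R)).

(* Row k of this matrix is the vector w_{I_{k+1}}. *)
Definition null_basis (R : fieldType) (n : nat) (e : rel (vert n))
  (lab : 'I_(n - 3) -> vert n * vert n) : 'M[R]_(n - 3, n + (n - 3)) :=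
  \matrix_(k < n - 3, j < n + (n - 3))
     match split j with
     | inl i => - (((split_f e (lab k) i)%:R - 1)
                   / ((n - 2)%:R * (split_c e (lab k) i)%:R))
     | inr k' => if k' == k then 1 else 0
     end.

(* Null space of M : 'M_(m, p) = { x in R^p | M x = 0 }, represented (as usual
   in mxalgebra) by the row space of a matrix of row vectors: x^T with
   x^T *m M^T = 0. *)
Definition nullspace (R : fieldType) (m p : nat) (M : 'M[R]_(m, p)) : 'M[R]_p :=
  kermx M^T.

(* Main.v *)
Require Import Defs.
From mathcomp Require Import all_boot all_order all_algebra.
From mathcomp Require Import ring lra zify.
Import GRing.Theory Num.Theory.
Set Implicit Arguments. Unset Strict Implicit. Unset Printing Implicit Defensive.

Section Span.
Variables (T : finType) (H : rel T).
Hypothesis Hsym : symmetric H.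
Variable r : T.

Fixpoint ball k : {set T} :=
  if k is k'.+1 then ball k' :|: [set w | [exists x in ball k', H x w]] else [set r].

Lemma ball_path p x k : x \in ball k -> path H x p -> last x p \in ball (k + size p).
Proof.
elim: p x k => [|y p IH] x k /=; first by rewrite addn0.
move=> xk /andP[Hxy Hp]; rewrite -addSnnS; apply: IH Hp.
by rewrite /= inE; apply/orP; right; rewrite inE; apply/existsP; exists x; rewrite xk.
Qed.

Lemma ball_conn w : connect H r w -> exists k, w \in ball k.
Proof. case/connectP=> p Hp ->; exists (0 + size p)%N; apply: ball_path Hp; exact: set11. Qed.

Lemma ball_sub k w : w \in ball k -> connect H r w.
Proof.
elim: k w => [|k IH] w /=; first by rewrite inE => /eqP ->.
rewrite !inE => /orP[/IH //| /existsP[x /andP[xk Hxw]]].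
exact: connect_trans (IH _ xk) (connect1 Hxw).
Qed.

Lemma dP w : exists k, (w \in ball k) || ~~ connect H r w.
Proof.
case: (boolP (connect H r w)) => [/ball_conn[k Hk]|_]; first by exists k; rewrite Hk.
by exists 0%N; rewrite orbT.
Qed.

Definition d w := ex_minn (dP w).

Lemma parent_ex w : connect H r w -> w != r -> exists x, H x w && (d x < d w)%N.
Proof.
move=> cw nr; rewrite {2}/d; case: (ex_minnP (dP w)) => m; rewrite cw orbF => Pm minm.
case: m Pm minm => [|m] Pm minm; first by move: Pm; rewrite inE (negbTE nr).
move: Pm; rewrite /= inE => /orP[Pm|]; first by have := minm m; rewrite Pm ltnn => /(_ isT).
rewrite inE => /existsP[x /andP[xm Hxw]]; exists x; rewrite Hxw /=.
rewrite /d; case: (ex_minnP (dP x)) => m' _ minm'.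
by rewrite ltnS minm' // xm.
Qed.

Definition par w := odflt r [pick x | H x w && (d x < d w)%N].

Lemma parP w : connect H r w -> w != r -> H (par w) w && (d (par w) < d w)%N.
Proof.
move=> cw nr; rewrite /par; case: pickP => [x -> //|none].
by have [x Hx] := parent_ex cw nr; rewrite none in Hx.
Qed.

Lemma span_count :
  (2 * (#|[set w | connect H r w]| - 1) <=
     #|[set p : T * T | (p.1 \in [set w | connect H r w]) && H p.1 p.2]|)%N.
Proof.
set X := [set w | connect H r w].
set Y := X :\ r.
have rX : r \in X by rewrite inE connect0.
have cY : #|Y| = (#|X| - 1)%N by have := cardsD1 r X; rewrite rX -/Y /=; lia.
have inY w : w \in Y -> connect H r w /\ w != r by rewrite !inE => /andP[-> ->].
set S1 := [set (w, par w) | w in Y]; set S2 := [set (par w, w) | w in Y].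
have c1 : #|S1| = #|Y| by apply: card_imset => a b [].
have c2 : #|S2| = #|Y| by apply: card_imset => a b [].
have c0 : S1 :&: S2 = set0.
  apply/setP=> p; rewrite inE in_set0; apply/negP => /andP[/imsetP[w wY ->] /imsetP[w' w'Y [e1 e2]]].
  have [cw nw] := inY _ wY; have [cw' nw'] := inY _ w'Y.
  have /andP[_ l1] := parP cw nw; have /andP[_ l2] := parP cw' nw'.
  by move: l1 l2; rewrite -e1 e2; lia.
have sub : S1 :|: S2 \subset [set p : T * T | (p.1 \in X) && H p.1 p.2].
  apply/subsetP => p /setUP[] /imsetP[w wY ->]; have [cw nw] := inY _ wY;
    have /andP[Hp _] := parP cw nw; rewrite !inE /=.
    by rewrite cw Hsym.
  by rewrite Hp andbT; apply: connect_trans cw _; apply: connect1; rewrite Hsym.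
have := subset_leq_card sub; rewrite cardsU c0 cards0 c1 c2 cY; lia.
Qed.

End Span.

Lemma card_E (T : finType) (H : rel T) (X : {set T}) :
  #|[set p : T * T | (p.1 \in X) && H p.1 p.2]| = (\sum_(w in X) #|[set y | H w y]|)%N.
Proof.
rewrite -sum1_card big_mkcond /=.
set S := [set p : T * T | (p.1 \in X) && H p.1 p.2].
rewrite (eq_bigr (fun p : T * T => if (p.1, p.2) \in S then 1 else 0)%N); last by case.
rewrite -(pair_bigA _ (fun a b => if (a, b) \in S then 1 else 0)%N) /=.
rewrite [RHS]big_mkcond /=; apply: eq_bigr => w _.
rewrite -sum1_card; case: (boolP (w \in X)) => wX.
  by rewrite [RHS]big_mkcond; apply: eq_bigr => y _; rewrite !inE /= wX.
by rewrite big1 // => y _; rewrite !inE /= (negbTE wX).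
Qed.


Lemma del_sym (T : finType) (e : rel T) (uv : T * T) : symmetric e ->
  symmetric (fun x y => e x y && ~~ (((x == uv.1) && (y == uv.2)) || ((x == uv.2) && (y == uv.1)))).
Proof.
move=> s x y; rewrite s; congr (_ && ~~ _).
by case: (x == _); case: (y == _); case: (x == _); case: (y == _).
Qed.

Section Tree.
Variables (n : nat) (e : rel (vert n)).
Hypotheses (n3 : (3 <= n)%N) (tree : is_nleaf_tree e).
Variables (u v : vert n).
Hypothesis euv : e u v.

Local Notation e' := (del_edge e (u, v)).
Local Notation Xu := [set w | connect e' u w].
Local Notation Xv := [set w | connect e' v w].
Local Notation EE H X := [set p : vert n * vert n | (p.1 \in X) && H p.1 p.2].

Lemma esym : symmetric e. Proof. by case: tree. Qed.
Lemma e'sym : symmetric e'. Proof. exact: (del_sym (u, v) esym). Qed.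
Lemma e'conn : connect_sym e'. Proof. exact: sym_connect_sym e'sym. Qed.
Lemma uneqv : u != v.
Proof. case: tree => _ irr _ _ _; apply/eqP => uv; move: euv; by rewrite uv irr. Qed.

Lemma cover w : (w \in Xu) || (w \in Xv).
Proof.
have cl : closed e (Xu :|: Xv).
  suff imp x y : e x y -> x \in Xu :|: Xv -> y \in Xu :|: Xv.
    by move=> x y exy; apply/idP/idP; apply: imp; rewrite // esym.
  move=> exy; case: (boolP (e' x y)) => [exy' | ].
    by rewrite !inE => /orP[] c; apply/orP; [left|right]; apply: connect_trans c (connect1 exy').
  rewrite /del_edge exy /= negbK => /orP[] /andP[_ /eqP ->]; by rewrite !inE connect0 ?orbT.
have := closed_connect cl (_ : connect e u w).
case: tree => _ _ cn _ _; move/(_ (cn u w)).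
by rewrite !inE connect0 /= => <-.
Qed.

Lemma card_Ee' : (#|[set p : vert n * vert n | e' p.1 p.2]| + 2 <= #|[set p : vert n * vert n | e p.1 p.2]|)%N.
Proof.
set E := [set p : vert n * vert n | e p.1 p.2].
have s : [set p : vert n * vert n | e' p.1 p.2] \subset E :\ (u, v) :\ (v, u).
  apply/subsetP => -[x y]; rewrite !inE /= /del_edge => /andP[-> ]; rewrite andbT.
  by rewrite /= !xpair_eqE negb_or andbC.
have := subset_leq_card s.
have := cardsD1 (u, v) E; have := cardsD1 (v, u) (E :\ (u, v)).
rewrite !inE /= euv esym euv /= andbT.
have -> : ((v, u) != (u, v)) by apply/eqP => -[h _]; move/eqP: uneqv; rewrite h.
move=> /= h1 h2; lia.
Qed.

Lemma card_EX (X : {set vert n}) : (#|EE e X| <= #|EE e' X| + 2)%N.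
Proof.
have s : EE e X \subset EE e' X :|: [set (u, v); (v, u)].
  apply/subsetP => -[x y]; rewrite !inE /= /del_edge => /andP[-> ->] /=.
  by case: (x =P u); case: (y =P v); case: (x =P v); case: (y =P u) => //= *; subst; rewrite ?eqxx ?orbT.
have := subset_leq_card s; rewrite cardsU; have := cards2 (u, v) (v, u).
case: (_ != _) => /= -> ; lia.
Qed.

Lemma sep : v \notin Xu.
Proof.
apply/negP => vXu.
have allX w : w \in Xu.
  have := cover w; rewrite !inE => /orP[//|]; apply: connect_trans; by rewrite inE in vXu.
have sp : (2 * (#|Xu| - 1) <= #|EE e' Xu|)%N := span_count e'sym u.
move: sp; have := card_Ee'.
have s : EE e' Xu \subset [set p : vert n * vert n | e' p.1 p.2].
  by apply/subsetP => p; rewrite !inE => /andP[].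
have := subset_leq_card s.
have -> : Xu = setT by apply/setP => w; rewrite allX inE.
case: tree => _ _ _ -> _; rewrite cardsT card_ord; lia.
Qed.

Lemma disj w : w \in Xu -> w \notin Xv.
Proof.
rewrite !inE => cu; apply/negP => cv; move: sep; rewrite inE.
by rewrite (connect_trans cu) // e'conn.
Qed.

Lemma XvC : Xv = ~: Xu.
Proof.
apply/setP => w; rewrite inE; have := cover w; have := @disj w.
by rewrite !inE; case: (connect e' u w) => /= [h _|_ ->//]; apply/negbTE/h.
Qed.

Lemma count_u : (#|EE e' Xu| <= 2 * (#|Xu| - 1))%N.
Proof.
have s : EE e' Xu :|: EE e' Xv \subset [set p : vert n * vert n | e' p.1 p.2].
  by apply/subsetP => p; rewrite !inE => /orP[] /andP[].
have i0 : EE e' Xu :&: EE e' Xv = set0.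
  apply/setP => p; rewrite !inE; apply/negP => /andP[/andP[h1 _] /andP[h2 _]].
  by have := @disj p.1; rewrite !inE h1 h2 => /(_ isT).
have := subset_leq_card s; rewrite cardsU i0 cards0.
have sp : (2 * (#|Xv| - 1) <= #|EE e' Xv|)%N := span_count e'sym v.
move: sp; have := card_Ee'.
have := cardsC Xu; rewrite -XvC.
have vX : (0 < #|Xv|)%N by apply/card_gt0P; exists v; rewrite inE connect0.
case: tree => _ _ _ -> _; rewrite card_ord; lia.
Qed.

Lemma leaf_exists : exists2 w, w \in Xu & (w < n)%N.
Proof.
case: (boolP [exists w in Xu, (w < n)%N]) => [/exists_inP //| /negP nl].
exfalso.
have := card_EX Xu; have := count_u; rewrite (card_E e Xu).
rewrite (eq_bigr (fun _ => 3%N)); last first.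
  move=> w wX; case: tree => _ _ _ _ ->.
  by case: ifP => // h; case: nl; apply/exists_inP; exists w.
rewrite sum_nat_const.
have : (0 < #|Xu|)%N by apply/card_gt0P; exists u; rewrite inE connect0.
move: (#|EE e' Xu|) (#|Xu|) => k m; lia.
Qed.

Local Notation A := [set l : 'I_n | connect e' u (leafv l)].

Lemma split_c_eq l : split_c e (u, v) l = if l \in A then #|A| else (n - #|A|)%N.
Proof.
rewrite /split_c; case: (boolP (l \in A)) => lA.
  apply: eq_card => l'; rewrite !inE; move: lA; rewrite inE => cu.
  apply/idP/idP => h; first exact: connect_trans cu h.
  by apply: connect_trans h; rewrite e'conn.
have <- : #|~: A| = (n - #|A|)%N by have := cardsC A; rewrite card_ord; lia.
apply: eq_card => l'; rewrite !inE.
have : leafv l \in Xv by rewrite XvC !inE; rewrite inE in lA.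
rewrite inE => cv.
have -> : connect e' u (leafv l') = (leafv l' \in Xu) by rewrite inE.
rewrite -in_setC -XvC inE.
apply/idP/idP => h; first exact: connect_trans cv h.
by apply: connect_trans h; rewrite e'conn.
Qed.

Lemma A_gt0 : (0 < #|A|)%N.
Proof.
have [w wX wn] := leaf_exists; apply/card_gt0P; exists (Ordinal wn).
rewrite inE; rewrite inE in wX; congr (connect _ _ _): wX; exact: val_inj.
Qed.

Lemma leaf_iso i : u = leafv i -> A = [set i].
Proof.
move=> ui; apply/setP => l; rewrite !inE; apply/idP/idP; last first.
  by move/eqP ->; rewrite ui connect0.
have iso y : ~~ e' u y.
  rewrite /del_edge /= negb_and negbK eqxx /=; apply/orP; case: (boolP (e u y)) => h; last by left.
  right.
  have : y \in [set y | e u y] by rewrite inE.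
  have : v \in [set y | e u y] by rewrite inE.
  case: tree => _ _ _ _ /(_ u); rewrite ui /= ltn_ord -ui => /eqP/cards1P[z ->].
  by rewrite !inE => /eqP vz /eqP yz; rewrite yz vz eqxx.
case/connectP => -[|y p] /=; last by rewrite (negbTE (iso y)).
by move=> _; rewrite ui => /lshift_inj ->.
Qed.

End Tree.

Lemma del_swap n (e : rel (vert n)) u v : del_edge e (v, u) =2 del_edge e (u, v).
Proof.
move=> x y; rewrite /del_edge /=; congr (_ && ~~ _).
by case: (x == _); case: (y == _); case: (x == _); case: (y == _).
Qed.

Lemma edge_classes n (e : rel (vert n)) : (3 <= n)%N -> is_nleaf_tree e ->
  forall u v, e u v -> exists A : {set 'I_n},
  [/\ (0 < #|A|)%N, (#|A| < n)%N & forall l, split_c e (u, v) l = if l \in A then #|A| else (n - #|A|)%N].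
Proof.
move=> n3 tree u v euv; exists [set l : 'I_n | connect (del_edge e (u, v)) u (leafv l)].
split; [exact: A_gt0 | | exact: split_c_eq].
have evu : e v u by rewrite (esym tree).
have := A_gt0 n3 tree evu; move/card_gt0P => [l]; rewrite inE => cl.
set A := [set l : 'I_n | _].
have : l \notin A.
  rewrite inE; apply/negP => cu.
  have := @disj n e n3 tree u v euv (leafv l); rewrite !inE cu => /(_ isT).
  by rewrite -(eq_connect (del_swap e u v)) cl.
move=> lA; have := cardsC A; rewrite card_ord.
have : (0 < #|~: A|)%N by apply/card_gt0P; exists l; rewrite inE.
move: (#|A|) (#|~: A|) => a b; lia.
Qed.


Lemma leaf_class n (e : rel (vert n)) : (3 <= n)%N -> is_nleaf_tree e ->
  forall l i, split_c e (leaf_edge e l) i = if i == l then 1%N else (n - 1)%N.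
Proof.
move=> n3 tree l i; rewrite /leaf_edge; case: pickP => [w ew | none]; last first.
  case: tree => _ _ _ _ /(_ (leafv l)); rewrite /= ltn_ord => /eqP/cards1P[z].
  by move/setP/(_ z); rewrite !inE none eqxx.
rewrite (split_c_eq n3 tree ew) (leaf_iso tree ew (erefl _)) cards1 inE.
by case: (i == l).
Qed.

Local Open Scope ring_scope.

Section Entries.
Variables (R : realFieldType) (n : nat) (e : rel (vert n)) (lab : 'I_(n - 3) -> vert n * vert n).

Lemma splitl (l : 'I_n) : split (lshift (n - 3) l) = inl l.
Proof. exact: (unsplitK (inl _ l)). Qed.
Lemma splitr (k : 'I_(n - 3)) : split (rshift n k) = inr k.
Proof. exact: (unsplitK (inr _ k)). Qed.

Lemma NBl k l : null_basis R e lab k (lshift _ l) =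
  - (((n - split_c e (lab k) l)%N%:R - 1) / ((n - 2)%N%:R * (split_c e (lab k) l)%:R)).
Proof. by rewrite mxE splitl. Qed.

Lemma NBr k k' : null_basis R e lab k (rshift _ k') = (k' == k)%:R.
Proof. by rewrite mxE splitr; case: (k' == k). Qed.

Lemma Ml i l : shapley_matrix R e lab i (lshift _ l) =
  (n - split_c e (leaf_edge e l) i)%N%:R / (n%:R * (split_c e (leaf_edge e l) i)%:R).
Proof. by rewrite mxE /col_edge splitl. Qed.

Lemma Mr i k : shapley_matrix R e lab i (rshift _ k) =
  (n - split_c e (lab k) i)%N%:R / (n%:R * (split_c e (lab k) i)%:R).
Proof. by rewrite mxE /col_edge splitr. Qed.

End Entries.

Definition alpha (R : realFieldType) n : R := (n - 1)%N%:R / n%:R.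
Definition beta (R : realFieldType) n : R := 1 / (n%:R * (n - 1)%N%:R).

Lemma scal (R : realFieldType) (a b n : nat) : (0 < a)%N -> (0 < b)%N -> (a + b = n)%N -> (3 <= n)%N ->
  let x : R := -((b%:R - 1)/((n-2)%N%:R * a%:R)) in
  let y : R := -((a%:R - 1)/((n-2)%N%:R * b%:R)) in
  (x * a%:R + y * b%:R) * beta R n + x * (alpha R n - beta R n) + b%:R/(n%:R * a%:R) = 0.
Proof.
move=> a0 b0 abn n3 x y; rewrite /x /y /alpha /beta.
have h2 : (2 <= n)%N by lia.
have h1 : (1 <= n)%N by lia.
rewrite !natrB // -abn natrD.
have ha : 1 <= a%:R :> R by rewrite ler1n.
have hb : 1 <= b%:R :> R by rewrite ler1n.
have hn : 3 <= a%:R + b%:R :> R by rewrite -natrD (ler_nat R 3); lia.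
field.
have nz (z : R) : 0 < z -> z != 0 by exact: lt0r_neq0.
by rewrite !nz //; lra.
Qed.

Section Main.
Variables (R : realFieldType) (n : nat) (e : rel (vert n)) (lab : 'I_(n - 3) -> vert n * vert n).
Hypotheses (n3 : (3 <= n)%N) (tree : is_nleaf_tree e) (elab : forall k, e (lab k).1 (lab k).2).

Local Notation M := (shapley_matrix R e lab).
Local Notation NB := (null_basis R e lab).

Lemma Ml' i l : M i (lshift _ l) = if i == l then alpha R n else beta R n.
Proof.
rewrite Ml leaf_class //; case: (i == l); rewrite /alpha /beta ?mulr1 //.
by rewrite subKn //; lia.
Qed.

Lemma row_zero k i : (NB *m M^T) k i = 0.
Proof.
rewrite mxE big_split_ord /=.
rewrite [X in _ + X](bigD1 k) //= [X in _ + (_ + X)]big1 => [|k' nk]; last first.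
  by rewrite NBr (negbTE nk) mul0r.
rewrite NBr eqxx mul1r addr0 mxE Mr.
have [A [A0 An cE]] := edge_classes n3 tree (elab k).
have cE' l : split_c e (lab k) l = if l \in A then #|A| else (n - #|A|)%N.
  by rewrite [lab k]surjective_pairing cE.
set a := #|A|; set b := (n - a)%N.
have ab : (a + b)%N = n by rewrite /b; lia.
have b0 : (0 < b)%N by rewrite /b; lia.
set x : R := -((b%:R - 1)/((n-2)%N%:R * a%:R)).
set y : R := -((a%:R - 1)/((n-2)%N%:R * b%:R)).
have gE l : null_basis R e lab k (lshift (n - 3) l) = if l \in A then x else y.
  rewrite NBl cE'; case: (l \in A) => //.
  by rewrite -/b subKn // ltnW.
rewrite (eq_bigr (fun l => (if l \in A then x else y) * (if i == l then alpha R n else beta R n))); last first.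
  by move=> l _; rewrite gE mxE Ml'.
set g := fun l => if l \in A then x else y.
have S : \sum_(l < n) g l = x * a%:R + y * b%:R.
  rewrite (bigID (fun l => l \in A)) /=.
  rewrite (eq_bigr (fun _ => x)); last by move=> l lA; rewrite /g lA.
  rewrite [X in _ + X](eq_bigr (fun _ => y)); last by move=> l /negbTE lA; rewrite /g lA.
  rewrite sumr_const (eq_bigl (fun l => l \in ~: A)); last by move=> l; rewrite inE.
  rewrite sumr_const !mulr_natr; congr (_ + _); congr (_ *+ _).
  by have := cardsC A; rewrite card_ord -/a /b; lia.
rewrite (bigD1 i) //= eqxx.
rewrite (eq_bigr (fun l => g l * beta R n)); last first.
  by move=> l nl; rewrite eq_sym (negbTE nl).
rewrite -mulr_suml.
have S' : \sum_(l < n | l != i) g l = x * a%:R + y * b%:R - g i.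
  by rewrite -S [in RHS](bigD1 i) //= addrC addrK.
rewrite S' cE' /g.
case: (boolP (i \in A)) => iA.
  have := scal R A0 b0 ab n3; rewrite -/x -/y /b => <-.
  rewrite -/b; ring.
have := scal R b0 A0 _ n3; rewrite addnC => /(_ ab).
rewrite /b subKn ?(ltnW An) // -/b -/x -/y => <-.
ring.
Qed.

Lemma pq : alpha R n - beta R n + n%:R * beta R n = 1.
Proof.
rewrite /alpha /beta natrB; last lia.
have hn : 3 <= n%:R :> R by rewrite (ler_nat R 3).
field; rewrite lt0r_neq0; last lra; rewrite lt0r_neq0; lra.
Qed.

Lemma p0 : alpha R n - beta R n != 0.
Proof.
rewrite /alpha /beta natrB; last lia.
have hn : 3 <= n%:R :> R by rewrite (ler_nat R 3).
have -> : (n%:R - 1) / n%:R - 1 / (n%:R * (n%:R - 1)) = (n%:R - 2) / (n%:R - 1) :> R.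
  field; rewrite lt0r_neq0; last lra; rewrite lt0r_neq0; lra.
rewrite mulf_neq0 // ?invr_eq0 lt0r_neq0 //; lra.
Qed.

Lemma JJ : (const_mx 1 : 'M[R]_n) *m (const_mx 1 : 'M[R]_n) = n%:R *: (const_mx 1 : 'M[R]_n).
Proof.
apply/matrixP => i j; rewrite !mxE (eq_bigr (fun _ => 1)); last by move=> *; rewrite !mxE mulr1.
by rewrite sumr_const card_ord mulr1.
Qed.

Lemma lsub_form : lsubmx M = (alpha R n - beta R n) *: 1%:M + beta R n *: const_mx 1.
Proof.
apply/matrixP => i j; rewrite mxE Ml' !mxE.
by case: (i == j); rewrite /= ?mulr1 ?mulr0 ?add0r // addrNK.
Qed.

Lemma rankM : \rank M = n.
Proof.
set p := alpha R n - beta R n; set q := beta R n.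
set J := (const_mx 1 : 'M[R]_n).
set B := p^-1 *: (1%:M : 'M[R]_n) + (- (q / p)) *: J.
have LB : lsubmx M *m B = 1%:M.
  rewrite lsub_form /B mulmxDl !mulmxDr -!scalemxAl -!scalemxAr !mul1mx !mulmx1 JJ !scalerA.
  rewrite -addrA -scalerDl -scalerDl mulfV ?p0 // scale1r.
  rewrite -/p -/q; set s := (X in 1%:M + X *: _).
  have -> : s = 0.
    have hp := p0; have := pq; rewrite -/p -/q => hpq.
    have -> : s = q * (1 - (p + n%:R * q)) / p by rewrite /s; field.
    by rewrite hpq subrr mulr0 mul0r.
  by rewrite scale0r addr0.
apply/eqP; rewrite eqn_leq rank_leq_row /=.
have := mxrankM_maxl M (col_mx B 0).
by rewrite -{1}[M]hsubmxK mul_row_col mulmx0 addr0 LB mxrank1.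
Qed.

End Main.


Theorem theorem6 (R : realFieldType) (n : nat) (e : rel (vert n))
    (lab : 'I_(n - 3) -> vert n * vert n) :
  (3 <= n)%N -> is_nleaf_tree e -> is_internal_labeling e lab ->
  [/\ \rank (nullspace (shapley_matrix R e lab)) = (n - 3)%N,
      row_free (null_basis R e lab)
    & (null_basis R e lab == nullspace (shapley_matrix R e lab))%MS].
Proof.
move=> n3 tree [elab _ _].
have elab' k : e (lab k).1 (lab k).2 by case/and3P: (elab k).
have rk : \rank (nullspace (shapley_matrix R e lab)) = (n - 3)%N.
  by rewrite /nullspace mxrank_ker mxrank_tr (rankM R lab n3 tree); lia.
have sub : (null_basis R e lab <= nullspace (shapley_matrix R e lab))%MS.
  by rewrite /nullspace sub_kermx; apply/eqP/matrixP => k i; rewrite (row_zero R n3 tree elab') mxE.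
have rf : row_free (null_basis R e lab).
  rewrite /row_free eqn_leq rank_leq_row /=.
  have := mxrankM_maxl (null_basis R e lab) (col_mx 0 1%:M).
  rewrite -{1}[null_basis R e lab]hsubmxK mul_row_col mulmx0 add0r mulmx1.
  have -> : rsubmx (null_basis R e lab) = 1%:M.
    by apply/matrixP => k k'; rewrite mxE NBr mxE eq_sym.
  by rewrite mxrank1.
split => //; apply/andP; split => //.
have [_ <-] := mxrank_leqif_sup sub.
by rewrite rk (eqP rf).
Qed.
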